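(* If an infinite binary word $w$ is not weak abelian periodic, then the frequencies of letters in $w$ exist.
   Context: For a finite word $u$, $|u|_a$ is the number of occurrences of the letter $a$ in $u$, and $\rho_a(u)=|u|_a/|u|$ for nonempty $u$. The frequency of a letter $a$ in an infinite word $w$ is $\lim_{n\to\infty}\rho_a(\mathrm{pref}_n(w))$ (if it exists), with $\mathrm{pref}_n(w)$ the prefix of length $n$. An infinite word $w$ over $\Sigma$ is weak abelian periodic if $w=v_0v_1v_2\cdots$ with $v_0$ finite and $v_1,v_2,\dots$ nonempty finite words such that $\rho_a(v_i)=\rho_a(v_j)$ for all $a\in\Sigma$ and all $i,j\ge1$. *)

(* Defs.v *)
From mathcomp Require Import all_boot all_order all_algebra.
From mathcomp Require Import all_classical all_reals all_analysis.
Set Implicit Arguments. Unset Strict Implicit. Unset Printing Implicit Defensive.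
Import Order.TTheory GRing.Theory Num.Theory.
Import numFieldNormedType.Exports.
Local Open Scope classical_set_scope.
Local Open Scope ring_scope.

Definition infword (T : Type) := nat -> T.

Definition pref (T : Type) (n : nat) (w : infword T) : seq T :=
  [seq w i | i <- iota 0 n].

Definition occ (T : eqType) (a : T) (u : seq T) : nat := count_mem a u.

(* rho_a(u) = |u|_a / |u| (meaningful for nonempty u). *)
Definition rho (R : realType) (T : eqType) (a : T) (u : seq T) : R :=
  (occ a u)%:R / (size u)%:R.

(* The frequency of a in w exists: lim_{n->oo} rho_a(pref_n w) exists
   (n ranges over positive lengths, pref_{n+1}). *)
Definition freq_exists (R : realType) (T : eqType) (a : T) (w : infword T) : Prop :=
  exists l : R, (fun n : nat => rho R a (pref n.+1 w)) @ \oo --> l.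

(* w = v_0 v_1 v_2 ... : for every k, the prefix of w of length
   |v_0 ... v_k| equals v_0 ... v_k. *)
Definition is_factorization (T : Type) (w : infword T) (v : nat -> seq T) : Prop :=
  forall k : nat,
    pref (\sum_(i < k.+1) size (v i))%N w = flatten [seq v i | i <- iota 0 k.+1].

Definition weak_abelian_periodic (R : realType) (T : eqType) (w : infword T) : Prop :=
  exists v : nat -> seq T,
    is_factorization w v /\
    (forall i, (1 <= i)%N -> v i != [::]) /\
    (forall (a : T) (i j : nat), (1 <= i)%N -> (1 <= j)%N ->
        rho R a (v i) = rho R a (v j)).

(* Main.v *)
Require Import Defs.
From mathcomp Require Import all_boot all_order all_algebra.
From mathcomp Require Import all_classical all_reals all_analysis.
From mathcomp Require Import zify ring lra.
Set Implicit Arguments. Unset Strict Implicit. Unset Printing Implicit Defensive.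
Import Order.TTheory GRing.Theory Num.Theory.
Import numFieldNormedType.Exports.
Definition block (T : Type) (w : infword T) (t1 t2 : nat) : seq T :=
  [seq w j | j <- iota t1 (t2 - t1)].

Lemma size_pref (T : Type) n (w : infword T) : size (pref n w) = n.
Proof. by rewrite /pref size_map size_iota. Qed.

Lemma size_block (T : Type) (w : infword T) t1 t2 : size (block w t1 t2) = (t2 - t1)%N.
Proof. by rewrite /block size_map size_iota. Qed.

Lemma pref_block (T : Type) (w : infword T) t1 t2 : (t1 <= t2)%N ->
  pref t2 w = pref t1 w ++ block w t1 t2.
Proof. by move=> h; rewrite /pref /block -map_cat -iotaD subnKC. Qed.

Definition cnt (T : eqType) (a : T) (w : infword T) n := occ a (pref n w).

Lemma cnt_S (T : eqType) (a : T) w n : cnt a w n.+1 = (cnt a w n + (w n == a))%N.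
Proof.
rewrite /cnt (pref_block w (leqnSn n)) /occ count_cat /block subSnn /=.
by rewrite addn0 eq_sym.
Qed.

Lemma cnt_le (T : eqType) (a : T) w n : (cnt a w n <= n)%N.
Proof. by rewrite /cnt /occ -{2}(size_pref n w) count_size. Qed.

Lemma occ_block (T : eqType) (a : T) w t1 t2 : (t1 <= t2)%N ->
  occ a (block w t1 t2) = (cnt a w t2 - cnt a w t1)%N.
Proof. by move=> h; rewrite /cnt (pref_block w h) /occ count_cat addKn. Qed.

Lemma occ_bool (a b : bool) (u : seq bool) : b != a ->
  (occ b u + occ a u)%N = size u.
Proof.
move=> hab; rewrite /occ; elim: u => //= x u IH.
by case: a b x hab IH => [] [] [] //= _ IH; lia.
Qed.

Lemma crossing (A B : nat -> nat) q :
  (forall t, A t <= A t.+1 <= A t + q)%N ->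
  (forall t, B t <= B t.+1 <= B t + q)%N ->
  forall d i, (B i <= A i)%N != (B (i + d) <= A (i + d))%N ->
  exists t, (i <= t)%N /\ (B t <= A t < B t + q)%N.
Proof.
move=> hA hB; elim=> [|d IH] i; first by rewrite addn0 eqxx.
rewrite addnS => hd.
case: (boolP ((B i <= A i)%N != (B (i + d) <= A (i + d))%N)); first exact: IH.
rewrite negbK => /eqP e; rewrite e in hd.
have := hA (i + d); have := hB (i + d).
case: (leqP (B (i+d)) (A (i+d))) hd => h1 /=;
  case: (leqP (B (i+d).+1) (A (i+d).+1)) => h2 //= _ /andP[b1 b2] /andP[a1 a2].
  by exists (i + d); split; [exact: leq_addr|lia].
by exists (i + d).+1; split; [lia|lia].
Qed.

Lemma pigeon (P : nat -> nat -> Prop) q :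
  (forall N, exists t, (N <= t)%N /\ exists v, (v < q)%N /\ P v t) ->
  exists v, (v < q)%N /\ forall N, exists t, (N <= t)%N /\ P v t.
Proof.
elim: q => [|q IH] H.
  by have [t [_ [v [//]]]] := H 0%N.
case: (pselect (forall N, exists t, (N <= t)%N /\ P q t)) => hq.
  by exists q.
have [N0 hN0] : exists N0, forall t, (N0 <= t)%N -> ~ P q t.
  apply: contra_notP hq => hn N.
  apply: contra_notP hn => hn; exists N => t hNt hP; apply: hn; by exists t.
have [v [hv hP]] : exists v, (v < q)%N /\ forall N, exists t, (N <= t)%N /\ P v t.
  apply: IH => N; have [t [hNt [v [hv hP]]]] := H (maxn N N0).
  exists t; split; first by lia.
  exists v; split => //; rewrite ltnS leq_eqVlt in hv.
  case/orP: hv => // /eqP ev; subst v; exfalso; apply: (hN0 t) => //; lia.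
by exists v; split => //; apply: ltnW.
Qed.

Lemma finite_ev (P : nat -> nat -> nat -> Prop) q :
  (forall k, (k < q)%N -> exists N, forall n m, (N <= n)%N -> (N <= m)%N -> P k n m) ->
  exists N, forall k, (k < q)%N -> forall n m, (N <= n)%N -> (N <= m)%N -> P k n m.
Proof.
elim: q => [|q IH] H; first by exists 0%N.
have [N1 h1] := IH (fun k hk => H k (ltnW hk)).
have [N2 h2] := H q (ltnSn q).
exists (maxn N1 N2) => k hk n m hn hm.
rewrite ltnS leq_eqVlt in hk; case/orP: hk => [/eqP ->|hk].
  apply: h2; lia.
apply: h1 => //; lia.
Qed.

Local Open Scope ring_scope.
Lemma rho_val (R : realType) (b : bool) (u : seq bool) q e :
  (0 < size u)%N -> (0 < q)%N -> (q * occ b u = e * size u)%N ->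
  rho R b u = (e%:R / q%:R : R)%R.
Proof.
move=> hu hq h; rewrite /rho; apply/eqP.
rewrite eqr_div ?pnatr_eq0 -?lt0n // -!natrM; apply/eqP; congr (GRing.natmul 1 _).
by rewrite mulnC h.
Qed.

Lemma blk_dens (w : infword bool) a b q k v t1 t2 :
  (k <= q)%N -> (t1 <= t2)%N ->
  (q * cnt a w t1 = k * t1 + v)%N -> (q * cnt a w t2 = k * t2 + v)%N ->
  (q * occ b (block w t1 t2) = (if b == a then k else q - k) * size (block w t1 t2))%N.
Proof.
move=> hk h12 e1 e2.
have ha : (q * occ a (block w t1 t2) = k * size (block w t1 t2))%N.
  rewrite occ_block // size_block !mulnBr e1 e2; lia.
case: eqP => [->//|/eqP hba].
have := occ_bool (block w t1 t2) hba => hs.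
have -> : occ b (block w t1 t2) = (size (block w t1 t2) - occ a (block w t1 t2))%N by lia.
by rewrite mulnBr ha -mulnBl.
Qed.

Fixpoint seqT (f : nat -> nat) (i : nat) : nat :=
  if i is j.+1 then f (seqT f j).+1 else f 0%N.

Lemma wap_of (R : realType) (w : infword bool) a q k v :
  (0 < k < q)%N ->
  (forall N, exists t, (N <= t)%N /\ (q * cnt a w t = k * t + v)%N) ->
  weak_abelian_periodic R w.
Proof.
move=> /andP[hk0 hkq] H.
pose f N := sval (cid (H N)).
have hf N : (N <= f N)%N /\ (q * cnt a w (f N) = k * f N + v)%N.
  by rewrite /f; case: cid.
pose T := seqT f.
have hT i : (T i < T i.+1)%N by have [] := hf (T i).+1.
have hTv i : (q * cnt a w (T i) = k * T i + v)%N.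
  by case: i => [|i]; [exact: (hf 0%N).2|exact: (hf (T i).+1).2].
pose vv i := if i is j.+1 then block w (T j) (T j.+1) else pref (T 0%N) w.
have hsum n : (\sum_(i < n.+1) size (vv i))%N = T n.
  elim: n => [|n IH]; first by rewrite big_ord1 /= size_pref.
  rewrite big_ord_recr /= IH size_block; have := hT n; lia.
have hfl n : flatten [seq vv i | i <- iota 0 n.+1] = pref (T n) w.
  elim: n => [|n IH]; first by rewrite /= cats0.
  rewrite -addn1 iotaD map_cat flatten_cat IH /= cats0.
  by rewrite -pref_block // ltnW.
exists vv; split; [|split].
- by move=> n; rewrite hsum hfl.
- case=> // j _; rewrite -size_eq0 size_block; have := hT j; lia.
have hd b i : (1 <= i)%N ->
    rho R b (vv i) = ((if b == a then k else (q - k)%N)%:R / q%:R : R)%R.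
  case: i => // j _; apply: rho_val; last 1 first.
    by apply: blk_dens; [exact: ltnW|exact: ltnW|exact: hTv|exact: hTv].
    by rewrite size_block; have := hT j; lia.
  by lia.
by move=> b i j hi hj; rewrite !hd.
Qed.

Local Close Scope ring_scope.

Lemma D_le (c : nat -> nat) q n m : (0 < n)%N -> (0 < m)%N ->
  (forall k, (0 < k)%N -> (k < q)%N -> (k * n <= q * c n)%N = (k * m <= q * c m)%N) ->
  (minn (q * c n %/ n) q.-1 <= minn (q * c m %/ m) q.-1)%N.
Proof.
move=> hn hm H; set K := minn _ _.
have hK1 : (K <= q * c n %/ n)%N by rewrite /K geq_minl.
have hK2 : (K <= q.-1)%N by rewrite /K geq_minr.
case: (posnP K) => [->//|hK0].
rewrite leq_min hK2 andbT leq_divRL // -H //; first by rewrite -leq_divRL.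
by lia.
Qed.

Lemma D_bounds (c : nat -> nat) q n : (0 < n)%N -> (c n <= n)%N -> (0 < q)%N ->
  (minn (q * c n %/ n) q.-1 * n <= q * c n <= (minn (q * c n %/ n) q.-1).+1 * n)%N.
Proof.
move=> hn hc hq; apply/andP; split.
  by rewrite -leq_divRL // geq_minl.
case: (leqP (q * c n %/ n) q.-1) => h.
  exact: ltnW (ltn_ceil _ hn).
by rewrite prednK // leq_mul2l hc orbT.
Qed.

Lemma ev_const (R : realType) (w : infword bool) a q k :
  ~ weak_abelian_periodic R w -> (0 < k < q)%N ->
  exists N, forall n m, (N <= n)%N -> (N <= m)%N ->
    (k * n <= q * cnt a w n)%N = (k * m <= q * cnt a w m)%N.
Proof.
move=> hnot hkq; apply: contra_notP hnot => hne.
have hA t : (q * cnt a w t <= q * cnt a w t.+1 <= q * cnt a w t + q)%N.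
  by rewrite cnt_S mulnDr; case: (w t == a) => /=; lia.
have hB t : (k * t <= k * t.+1 <= k * t + q)%N by rewrite mulnS; lia.
have hall : forall N, exists t, (N <= t)%N /\
    exists v, (v < q)%N /\ (q * cnt a w t = k * t + v)%N.
  move=> N; apply: contra_notP hne => hN; exists N => n m hn hm.
  apply: contra_notP hN => hd.
  have cr := crossing hA hB.
  have [t [ht1 ht2]] : exists t, (minn n m <= t)%N /\
      (k * t <= q * cnt a w t < k * t + q)%N.
    case: (leqP n m) => hnm.
      apply: (cr (m - n)%N n).
      by rewrite subnKC //; apply/negP => /eqP.
    apply: (cr (n - m)%N m).
    rewrite subnKC ?(ltnW hnm) //; apply/negP => /eqP e; apply: hd; by rewrite e.
  exists t; split; first by lia.
  exists (q * cnt a w t - k * t)%N; split; lia.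
have [v [hv hinf]] := pigeon hall.
exact: (wap_of R hkq hinf).
Qed.
Local Open Scope classical_set_scope.
Local Open Scope ring_scope.

Lemma cauchy_ex (R : realType) (u : nat -> R) :
  (forall e : R, 0 < e -> exists N, forall n m, (N <= n)%N -> (N <= m)%N -> `|u n - u m| < e) ->
  exists l : R, u @ \oo --> l.
Proof.
move=> H; apply/cvg_ex; apply/cauchy_cvgP; apply/cauchy_ballP => e e0.
rewrite near_map2.
have [N HN] := H e e0.
exists ([set n | (N <= n)%N], [set n | (N <= n)%N]) => /=.
  by split; exists N.
move=> [n m] /= [hn hm]; rewrite -ball_normE /=.
by rewrite distrC; apply: HN.
Qed.

Lemma rho_bound (R : realType) (K q c n : nat) : (0 < n)%N ->
  (K * n <= q * c <= K.+1 * n)%N ->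
  ((K%:R : R) <= (q%:R * (c%:R / n%:R) : R) <= K%:R + 1).
Proof.
move=> hn /andP[h1 h2]; have hn' : (0 : R) < n%:R by rewrite ltr0n.
rewrite mulrA ler_pdivlMr // ler_pdivrMr // -!natrM ler_nat h1 /=.
by rewrite natr1 -natrM ler_nat.
Qed.

Lemma real_close (R : realType) (x y e : R) (K q : nat) : (0 < q)%N -> 0 < e ->
  e^-1 < q%:R ->
  K%:R <= q%:R * x <= K%:R + 1 -> K%:R <= q%:R * y <= K%:R + 1 -> `|x - y| < e.
Proof.
move=> hq he hqe /andP[a1 a2] /andP[b1 b2].
have hq' : (0 : R) < q%:R by rewrite ltr0n.
rewrite -(ltr_pM2r hq').
have -> : `|x - y| * q%:R = `|q%:R * x - q%:R * y|.
  by rewrite -mulrBr normrM (ger0_norm (ltW hq')) mulrC.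
have : 1 < e * q%:R by rewrite -ltr_pdivrMl // mulr1.
move: a1 a2 b1 b2; set X := q%:R * x; set Y := q%:R * y => a1 a2 b1 b2 h.
apply: le_lt_trans h; rewrite ler_norml; apply/andP; split; lra.
Qed.

Theorem corollary1 (R : realType) (w : infword bool) :
  ~ weak_abelian_periodic R w -> forall a : bool, freq_exists R a w.
Proof.
move=> hnot a; apply: cauchy_ex => e e0.
have he' : 0 <= e^-1 by rewrite invr_ge0 ltW.
have hB := archi_boundP he'.
set q := (Num.Def.archi_bound (e^-1)).+2.
have hqe : e^-1 < q%:R.
  apply: lt_le_trans hB _; rewrite ler_nat /q; lia.
have hq : (0 < q)%N by [].
have [N HN] : exists N, forall k, (k < q)%N -> forall n m, (N <= n)%N -> (N <= m)%N ->
    (0 < k)%N -> (k * n <= q * cnt a w n)%N = (k * m <= q * cnt a w m)%N.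
  apply: (@finite_ev (fun k n m => (0 < k)%N ->
    (k * n <= q * cnt a w n)%N = (k * m <= q * cnt a w m)%N)) => k hk.
  case: (posnP k) => [->|hk0]; first by exists 0%N.
  have hkq : (0 < k < q)%N by rewrite hk0 hk.
  have [N hN] := ev_const a hnot hkq.
  by exists N => n m hn hm _; apply: hN.
exists N => n m hn hm.
have H k : (0 < k)%N -> (k < q)%N ->
    (k * n.+1 <= q * cnt a w n.+1)%N = (k * m.+1 <= q * cnt a w m.+1)%N.
  by move=> hk0 hk; apply: HN => //; lia.
have hD : minn (q * cnt a w n.+1 %/ n.+1) q.-1 = minn (q * cnt a w m.+1 %/ m.+1) q.-1.
  apply/eqP; rewrite eqn_leq (D_le (ltn0Sn n) (ltn0Sn m) H) /=.
  by apply: D_le => // k hk0 hk; rewrite H.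
have bn := D_bounds (ltn0Sn n) (cnt_le a w n.+1) hq.
have bm := D_bounds (ltn0Sn m) (cnt_le a w m.+1) hq.
rewrite hD in bn.
rewrite /rho !size_pref.
apply: (real_close hq e0 hqe); apply: rho_bound => //.
  exact: bn.
exact: bm.
Qed.
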